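(* Let $r\in\mathbb N$ and let $(g_n)_{n\in\mathbb N}$ be a sequence in $\mathcal L_r$ whose supports are all contained in a common well-ordered set $W\subseteq\mathbb R_{\ge0}\times\mathbb Z^r$ with $\min W>\mathbf 0_{r+1}$, and let $g_0\in\mathcal L_r$. Let $\varphi\in\mathcal L_r^0$. Then $g_n\to g_0$ as $n\to\infty$ in the weak topology of $\mathcal L_r$ if and only if $g_n\circ\varphi\to g_0\circ\varphi$ as $n\to\infty$ in the weak topology of $\mathcal L_r$.
   Context: $z$ infinitesimal; $\boldsymbol\ell_1:=-1/\ln z$, $\boldsymbol\ell_{j+1}:=\boldsymbol\ell_j\circ\boldsymbol\ell_1$. $\mathcal L_r$: formal sums $\sum a_{\alpha,n_1,\dots,n_r}z^\alpha\boldsymbol\ell_1^{n_1}\cdots\boldsymbol\ell_r^{n_r}$, real coefficients, well-ordered support in $\mathbb R_{\ge0}\times\mathbb Z^r$ (lexicographic order). $\mathcal L_r^0$: elements with leading term $z$ (a group under composition of transseries). Weak topology: $(\varphi_n)\to\varphi$ iff for each $(\alpha,n_1,\dots,n_r)$ the coefficient of $z^\alpha\boldsymbol\ell_1^{n_1}\cdots\boldsymbol\ell_r^{n_r}$ in $\varphi_n$ converges in $\mathbb R$ to the corresponding coefficient of $\varphi$. *)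

(* Defs.v *)
From HB Require Import structures.
From mathcomp Require Import all_boot all_order all_algebra.
From mathcomp Require Import all_classical all_reals all_analysis.
Set Implicit Arguments. Unset Strict Implicit. Unset Printing Implicit Defensive.
Import Order.TTheory GRing.Theory Num.Theory.
Import numFieldNormedType.Exports.
Local Open Scope classical_set_scope.
Local Open Scope ring_scope.

(* Logarithmic transseries in L_r, represented by their coefficient functions.
   A monomial z^alpha l_1^{n_1} ... l_r^{n_r} is encoded by its exponent
   (alpha, n) : R * 'rV[int]_r, where n ord0 i is the exponent of l_{i+1}.
   Multiplication of monomials is addition of exponents. *)

Section Transseries.
Variables (R : realType) (r : nat).

Definition mon := (R * 'rV[int]_r)%type.
Definition ser := mon -> R.

Definition lsupp (f : ser) : set mon := [set m | f m != 0].

Definition lexltv (n k : 'rV[int]_r) : Prop :=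
  exists i : 'I_r, (forall j : 'I_r, (j < i)%N -> n ord0 j = k ord0 j)
                   /\ n ord0 i < k ord0 i.
Definition lexlt (a b : mon) : Prop :=
  a.1 < b.1 \/ (a.1 = b.1 /\ lexltv a.2 b.2).
Definition lexle (a b : mon) : Prop := lexlt a b \/ a = b.

Definition lex_wellordered (S : set mon) : Prop :=
  forall A : set mon, A `<=` S -> A !=set0 ->
    exists2 a, A a & forall b, A b -> lexle a b.

Definition inL (f : ser) : Prop :=
  lex_wellordered (lsupp f) /\ lsupp f `<=` [set m | 0 <= m.1].

Definition zmon : mon := (1, 0).

Definition inL0 (phi : ser) : Prop :=
  inL phi /\ phi zmon = 1 /\ forall m, lsupp phi m -> lexle zmon m.

Definition one : ser := fun m => (m == 0)%:R.
(* multiplication by the monomial m0 *)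
Definition shift (m0 : mon) (f : ser) : ser := fun m => f (m - m0).
Definition mul (f g : ser) : ser :=
  fun m => \sum_(m1 \in [set: mon]) f m1 * g (m - m1).
Definition pow (f : ser) (k : nat) : ser := iter k (mul f) one.
(* formal power series sum_k c_k d^k (d infinitesimal), summed coefficientwise *)
Definition powser (c : nat -> R) (d : ser) : ser :=
  fun m => \sum_(k \in [set: nat]) c k * pow d k m.

Definition binr (a : R) (k : nat) : R :=
  (\prod_(i < k) (a - i%:R)) / k`!%:R.
(* coefficients of log(1+x) *)
Definition logc (k : nat) : R := if k == 0%N then 0 else (-1) ^+ k.+1 / k%:R.
(* coefficients of x/(1-x) = sum_{k>=1} x^k *)
Definition geoc (k : nat) : R := if k == 0%N then 0 else 1.

(* the monomial l_{j+1} (for j < r) *)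
Definition ellmon (j : nat) : mon := (0, \row_(i < r) ((i : nat) == j)%:Z).
Definition ell (j : nat) : ser := fun m => (m == ellmon j)%:R.

(* For phi = z (1 + eps) in L_r^0:
     delta 0 = eps,
     l_{j+1} o phi = l_{j+1} (1 + delta (j+1)),
   where delta (j+1) = sum_{k>=1} (l_{j+1} log(1 + delta j))^k, since
   l_{j+1} o phi = -1/log(l_j o phi) = -1/(-1/l_{j+1} + log(1 + delta j))
   (with l_0 o phi = phi). *)
Definition eps (phi : ser) : ser := fun m => phi (m + zmon) - one m.
Fixpoint delta (phi : ser) (j : nat) : ser :=
  match j with
  | 0 => eps phi
  | j'.+1 => powser geoc (mul (ell j') (powser logc (delta phi j')))
  end.

(* (z^alpha l_1^{n_1} ... l_r^{n_r}) o phi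
     = z^alpha l^n * (1+eps)^alpha * prod_i (1 + delta (i+1))^{n_i}  *)
Definition unitfac (phi : ser) (m : mon) : ser :=
  mul (powser (binr m.1) (eps phi))
      (\big[mul/one]_(i < r) powser (binr (m.2 ord0 i)%:~R) (delta phi i.+1)).

(* composition g o phi = sum_m g_m (monomial m) o phi, summed coefficientwise *)
Definition compose (g phi : ser) : ser :=
  fun m => \sum_(m0 \in [set: mon]) g m0 * shift m0 (unitfac phi m0) m.

(* convergence in the weak topology: coefficientwise convergence *)
Definition weak_cvg (gs : nat -> ser) (g : ser) : Prop :=
  forall m : mon, (fun n => gs n m) @ \oo --> g m.

End Transseries.

(* Main.v *)
Require Import Defs.
From HB Require Import structures.
From mathcomp Require Import all_boot all_order all_algebra.
From mathcomp Require Import finmap.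
From mathcomp Require Import all_classical all_reals all_analysis.
Import Order.TTheory GRing.Theory Num.Theory.
Import numFieldNormedType.Exports.
Local Open Scope classical_set_scope.
Local Open Scope ring_scope.
Set Implicit Arguments. Unset Strict Implicit. Unset Printing Implicit Defensive.
Section S.
Variables (R : realType) (r : nat).
Local Notation mon := (mon R r).
Implicit Types (a b c : mon).

Lemma ltv_irr (n : 'rV[int]_r) : ~ lexltv n n.
Proof. by case=> i [_]; rewrite ltxx. Qed.

Lemma ltv_trans (n k l : 'rV[int]_r) : lexltv n k -> lexltv k l -> lexltv n l.
Proof.
move=> [i [Hi1 Hi2]] [j [Hj1 Hj2]].
case: (ltngtP i j) => [ij|ji|/val_inj ij].
- exists i; split; first by move=> x xi; rewrite Hi1 // Hj1 //; apply: ltn_trans ij.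
  by rewrite -(Hj1 _ ij).
- exists j; split; first by move=> x xj; rewrite Hi1 ?Hj1 //; apply: ltn_trans ji.
  by rewrite (Hi1 _ ji).
- subst j; exists i; split; first by move=> x xi; rewrite Hi1 ?Hj1.
  exact: lt_trans Hi2 Hj2.
Qed.

Lemma ltv_total (n k : 'rV[int]_r) : n = k \/ lexltv n k \/ lexltv k n.
Proof.
case: (pselect (exists j : 'I_r, n ord0 j != k ord0 j)) => [[j0 Hj0]|H].
  right; case: (@arg_minnP _ j0 (fun i : 'I_r => n ord0 i != k ord0 i) (fun i : 'I_r => i : nat) Hj0) => i Pi Hmin.
  have Heq : forall x : 'I_r, (x < i)%N -> n ord0 x = k ord0 x.
    move=> x xi; apply/eqP; apply: contraTT xi => /Hmin; rewrite -leqNgt //.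
  case: (ltgtP (n ord0 i) (k ord0 i)) => [h|h|h].
  - by left; exists i.
  - by right; exists i; split=> // x /Heq ->.
  - by rewrite h eqxx in Pi.
left; apply/rowP => j.
apply/eqP; apply: contra_notT H => H; by exists j.
Qed.
Lemma ltv_add (n k l : 'rV[int]_r) : lexltv n k -> lexltv (n + l) (k + l).
Proof.
move=> [i [H1 H2]]; exists i; split.
  by move=> j ji; rewrite !mxE H1.
by rewrite !mxE ltrD2r.
Qed.

Lemma lt_irr a : ~ lexlt a a.
Proof. by case; [rewrite ltxx | case=> _ /ltv_irr]. Qed.

Lemma lt_trans' a b c : lexlt a b -> lexlt b c -> lexlt a c.
Proof.
case=> [h1|[e1 h1]] [h2|[e2 h2]].
- by left; apply: lt_trans h1 h2.
- by left; rewrite -e2.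
- by left; rewrite e1.
- by right; split; [rewrite e1 | apply: ltv_trans h1 h2].
Qed.

Lemma lt_total a b : a = b \/ lexlt a b \/ lexlt b a.
Proof.
case: a b => [a1 a2] [b1 b2] /=.
case: (ltgtP a1 b1) => [h|h|h].
- by right; left; left.
- by right; right; left.
- case: (ltv_total a2 b2) => [e|[h'|h']].
  + by left; rewrite h e.
  + by right; left; right.
  + by right; right; right.
Qed.

Lemma lt_add a b c : lexlt a b -> lexlt (a + c) (b + c).
Proof.
case: a b c => [a1 a2] [b1 b2] [c1 c2] /=.
case=> [/= h|[/= e h]]; first by left; rewrite /= ltrD2r.
by right; split; [rewrite /= e | apply: ltv_add].
Qed.

Lemma le_refl' a : lexle a a. Proof. by right. Qed.
Lemma lt_le a b : lexlt a b -> lexle a b. Proof. by left. Qed.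

Lemma le_trans' a b c : lexle a b -> lexle b c -> lexle a c.
Proof.
case=> [h1|<-] [h2|<-]; try by [left | right].
by left; apply: lt_trans' h1 h2.
Qed.

Lemma lt_le_trans' a b c : lexlt a b -> lexle b c -> lexlt a c.
Proof. by move=> h [h'|<-] //; apply: lt_trans' h h'. Qed.

Lemma le_lt_trans' a b c : lexle a b -> lexlt b c -> lexlt a c.
Proof. by case=> [h|<-] h' //; apply: lt_trans' h h'. Qed.

Lemma lt_nle a b : lexlt a b -> ~ lexle b a.
Proof. by move=> h /(lt_le_trans' h) /lt_irr. Qed.

Lemma nlt_le a b : ~ lexlt a b -> lexle b a.
Proof. by case: (lt_total a b) => [->|[h|h]] H; [right| |left]. Qed.

Lemma le_antisym a b : lexle a b -> lexle b a -> a = b.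
Proof. by case=> // h /(lt_nle h). Qed.

Lemma le_add a b c : lexle a b -> lexle (a + c) (b + c).
Proof. by case=> [h|<-]; [left; apply: lt_add | right]. Qed.

Lemma lt_addr a b c : lexlt (a + c) (b + c) -> lexlt a b.
Proof. by move/(lt_add (- c)); rewrite !addrK. Qed.

Lemma le_addr a b c : lexle (a + c) (b + c) -> lexle a b.
Proof. by move/(le_add (- c)); rewrite !addrK. Qed.

Lemma lt0_sub a b : lexlt a b <-> lexlt 0 (b - a).
Proof.
split=> h; first by rewrite -(subrr a); apply: lt_add.
by apply: (@lt_addr _ _ (- a)); rewrite subrr.
Qed.

Lemma le0_sub a b : lexle a b <-> lexle 0 (b - a).
Proof.
split=> h; first by rewrite -(subrr a); apply: le_add.
by apply: (@le_addr _ _ (- a)); rewrite subrr.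
Qed.

Lemma le0_add a b : lexle 0 a -> lexle 0 b -> lexle 0 (a + b).
Proof. by move=> ha hb; apply: le_trans' ha _; rewrite -{1}(addr0 a) addrC (addrC a); apply: le_add. Qed.


Definition NDS (S : set mon) := forall x : nat -> mon,
  (forall n, S (x n)) -> ~ (forall n, lexlt (x n.+1) (x n)).
Definition sumset (A B : set mon) : set mon :=
  [set x | exists a b, A a /\ B b /\ x = a + b].
Local Notation WO := (@lex_wellordered R r).

Lemma WO_sub (S S' : set mon) : S `<=` S' -> WO S' -> WO S.
Proof. by move=> sub h A AS; apply: h; apply: subset_trans sub. Qed.

Lemma WO_NDS S : WO S -> NDS S.
Proof.
move=> h x Sx dec.
have [a [n _ <-] Hmin] := h (range x) ltac:(by move=> _ [n _ <-]) (ex_intro _ (x 0%N) (ex_intro2 _ _ 0%N I (Logic.eq_refl _))).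
have := Hmin (x n.+1) (ex_intro2 _ _ n.+1 I (Logic.eq_refl _)).
exact: lt_nle (dec n).
Qed.

Lemma NDS_WO S : NDS S -> WO S.
Proof.
move=> h A AS [a0 Aa0]; apply: contrapT => nomin.
have step : forall a, exists b, A a -> A b /\ lexlt b a.
  move=> a; case: (pselect (A a)) => Aa; last by exists a.
  have : ~ (forall b, A b -> lexle a b) by move=> H; apply: nomin; exists a.
  move=> /existsNP [b /not_implyP [Ab nle]]; exists b => _; split=> //.
  case: (lt_total b a) => [e|[//|l]]; first by exfalso; apply: nle; rewrite e; right.
  by exfalso; apply: nle; left.
have [f Hf] := choice step.
have Ax : forall n, A (iter n f a0).
  by elim=> [|n IH] //=; case: (Hf _ IH).
apply: (h (fun n => iter n f a0)) => [n|n]; first exact: AS.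
by case: (Hf _ (Ax n)).
Qed.

Lemma dec_chain (x : nat -> mon) : (forall n, lexlt (x n.+1) (x n)) ->
  forall i j, (i < j)%N -> lexlt (x j) (x i).
Proof.
move=> dec i; elim=> [//|j IH]; rewrite ltnS leq_eqVlt => /orP[/eqP->|ij].
  exact: dec.
exact: lt_trans' (dec j) (IH ij).
Qed.

Lemma WO_subseq S (x : nat -> mon) : WO S -> (forall n, S (x n)) ->
  exists s : nat -> nat, (forall k, (s k < s k.+1)%N) /\
    forall k, lexle (x (s k)) (x (s k.+1)).
Proof.
move=> h Sx.
have nx : forall i, exists j, (i < j)%N /\ forall j', (i < j')%N -> lexle (x j) (x j').
  move=> i.
  have [a [[j ij <-] Hmin]] : exists a, [set x j | j in [set j | (i < j)%N]] a /\
      forall b, [set x j | j in [set j | (i < j)%N]] b -> lexle a b.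
    have [a Ha1 Ha2] := h [set x j | j in [set j | (i < j)%N]]
      ltac:(by move=> _ [j _ <-]) (ex_intro _ (x i.+1) (ex_intro2 _ _ i.+1 (ltnSn i) (Logic.eq_refl _))).
    by exists a.
  exists j; split=> // j' ij'; apply: Hmin; by exists j'.
have [nxt Hn] := choice nx.
exists (fun k => iter k.+1 nxt 0%N); split.
  by move=> k /=; case: (Hn (iter k.+1 nxt 0%N)).
move=> k /=; case: (Hn (iter k nxt 0%N)) => _; apply.
case: (Hn (iter k nxt 0%N)) => h1 _; case: (Hn (nxt (iter k nxt 0%N))) => h2 _.
exact: ltn_trans h1 h2.
Qed.

Lemma WO_sumset A B : WO A -> WO B -> WO (sumset A B).
Proof.
move=> hA hB; apply: NDS_WO => x Sx dec.
have /choice [fa Hfa] : forall n, exists a, A a /\ exists b, B b /\ x n = a + b.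
  by move=> n; case: (Sx n) => a [b [Aa [Bb e]]]; exists a; split=> //; exists b.
have /choice [fb Hfb] : forall n, exists b, B b /\ x n = fa n + b.
  by move=> n; case: (Hfa n) => _ [b [Bb e]]; exists b.
have [s [sinc sle]] := WO_subseq hA (fun n => proj1 (Hfa n)).
apply: (WO_NDS hB (x := fun k => fb (s k))); first by move=> k; case: (Hfb (s k)).
move=> k /=.
have lt := dec_chain dec (sinc k).
case: (Hfb (s k)) => _ e1; case: (Hfb (s k.+1)) => _ e2.
rewrite e1 e2 in lt.
have := le_add (fb (s k.+1)) (sle k).
move=> le1; have := le_lt_trans' le1 lt.
by rewrite (addrC (fa (s k))) (addrC (fa (s k))); apply: lt_addr.
Qed.

Lemma WO_setU A B : WO A -> WO B -> WO (A `|` B).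
Proof.
move=> hA hB C CAB [c Cc].
case: (pselect ((C `&` A) !=set0)) => [nA|nA];
case: (pselect ((C `&` B) !=set0)) => [nB|nB].
- have [a [Ca Aa] Ha] := hA _ (fun _ (h : (C `&` _) _) => proj2 h) nA.
  have [b [Cb Bb] Hb] := hB _ (fun _ (h : (C `&` _) _) => proj2 h) nB.
  case: (lt_total a b) => [e|[l|l]].
  + exists a => // y Cy; case: (CAB _ Cy) => [Ay|By]; first exact: Ha.
    by rewrite e; apply: Hb.
  + exists a => // y Cy; case: (CAB _ Cy) => [Ay|By]; first exact: Ha.
    by apply: le_trans' (lt_le l) (Hb _ _).
  + exists b => // y Cy; case: (CAB _ Cy) => [Ay|By]; last exact: Hb.
    by apply: le_trans' (lt_le l) (Ha _ _).
- have [a [Ca Aa] Ha] := hA _ (fun _ (h : (C `&` _) _) => proj2 h) nA.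
  exists a => // y Cy; case: (CAB _ Cy) => [Ay|By]; first exact: Ha.
  by exfalso; apply: nB; exists y.
- have [b [Cb Bb] Hb] := hB _ (fun _ (h : (C `&` _) _) => proj2 h) nB.
  exists b => // y Cy; case: (CAB _ Cy) => [Ay|By]; last exact: Hb.
  by exfalso; apply: nA; exists y.
- by exfalso; case: (CAB _ Cc) => h; [apply: nA | apply: nB]; exists c.
Qed.

Lemma WO_set1 a : WO [set a].
Proof.
move=> C Ca [c Cc]; exists c => // y Cy.
by rewrite (Ca _ Cc) (Ca _ Cy); right.
Qed.


Definition coord (l : nat) (x : mon) : R :=
  match l with
  | 0%N => x.1
  | i.+1 => if (insub i : option 'I_r) is Some j then (x.2 ord0 j)%:~R else 0
  end.

Lemma coordD l x y : coord l (x + y) = coord l x + coord l y.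
Proof.
case: l => [//|i] /=; case: (insub i) => [j|]; last by rewrite addr0.
by rewrite mxE intrD.
Qed.

Lemma coord0 l : coord l 0 = 0.
Proof. by case: l => [//|i] /=; case: (insub i) => [j|] //; rewrite mxE. Qed.

Lemma coord_sum l (s : seq mon) (Q : pred mon) :
  coord l (\sum_(p <- s | Q p) p) = \sum_(p <- s | Q p) coord l p.
Proof.
elim: s => [|a s IH]; first by rewrite !big_nil coord0.
by rewrite !big_cons; case: (Q a); rewrite ?coordD IH.
Qed.

Definition G (l : nat) (x : mon) : Prop := forall k, (k < l)%N -> coord k x = 0.

Lemma G_lt l x y : G l x -> G l y -> coord l x < coord l y -> lexlt x y.
Proof.
case: l => [|i] Gx Gy h; first by left.
have x1 : x.1 = 0 by exact: (Gx 0%N).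
have y1 : y.1 = 0 by exact: (Gy 0%N).
move: h => /=; case: insubP => [j ji ej|]; last by rewrite ltxx.
rewrite ltr_int => h; right; split; first by rewrite x1 y1.
exists j; split=> // j' j'j.
have lt' : (j'.+1 < i.+1)%N by rewrite ltnS -ej.
have := Gx _ lt'; have := Gy _ lt'; rewrite /= valK => hy hx.
by apply/eqP; rewrite -(eqr_int R) hx hy.
Qed.

Lemma G_le l x y : lexle x y -> G l x -> G l y -> coord l x <= coord l y.
Proof.
move=> h Gx Gy; rewrite leNgt; apply/negP => /(G_lt Gy Gx) l'.
exact: lt_nle l' h.
Qed.

Lemma GD l x y : G l x -> G l y -> G l (x + y).
Proof. by move=> Gx Gy k kl; rewrite coordD Gx ?Gy ?addr0. Qed.

Lemma G0 l : G l 0.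
Proof. by move=> k _; rewrite coord0. Qed.

Lemma GS l x : G l.+1 x <-> G l x /\ coord l x = 0.
Proof.
split=> [h|[h1 h2] k]; first by split=> [k kl|]; apply: h => //; apply: ltnW.
by rewrite ltnS leq_eqVlt => /orP[/eqP->|]; [| apply: h1].
Qed.

Lemma G_top x : G r.+1 x -> x = 0.
Proof.
move=> h; case: x h => [x1 x2] h.
have -> : x1 = 0 by exact: (h 0%N).
congr pair; apply/rowP => j; rewrite mxE.
have := h (j : nat).+1; rewrite ltnS /= valK => /(_ (ltn_ord j)) /eqP.
by rewrite intr_eq0 => /eqP.
Qed.

Definition M (Q : set mon) : set mon :=
  [set x | exists s : seq mon, (forall p, p \in s -> Q p) /\ x = \sum_(p <- s) p].

Fixpoint SK (k : nat) (Q : set mon) : set mon :=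
  if k is k'.+1 then sumset ([set 0] `|` Q) (SK k' Q) else [set 0].

Lemma WO_SK k Q : WO Q -> WO (SK k Q).
Proof.
move=> h; elim: k => [|k IH] /=; first exact: WO_set1.
by apply: WO_sumset => //; apply: WO_setU => //; apply: WO_set1.
Qed.

Lemma SK0 k Q : SK k Q 0.
Proof. by elim: k => [|k IH] //=; exists 0, 0; rewrite addr0; split=> //; left. Qed.

Lemma SK_sum k Q (s : seq mon) : (forall p, p \in s -> Q p) -> (size s <= k)%N ->
  SK k Q (\sum_(p <- s) p).
Proof.
elim: k s => [|k IH] [|a s] //= Hs hk; rewrite ?big_nil ?big_cons //.
- by exists 0, 0; rewrite addr0; split; [left | split; [apply: SK0|]].
- exists a, (\sum_(p <- s) p); split; first by right; apply: Hs; rewrite inE eqxx.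
  split=> //; apply: IH => // p ps; apply: Hs; by rewrite inE ps orbT.
Qed.

Lemma NDS_sub S S' : S `<=` S' -> NDS S' -> NDS S.
Proof. by move=> sub h x Sx; apply: h => n; apply: sub. Qed.

Lemma M_G l Q : Q `<=` G l -> M Q `<=` G l.
Proof.
move=> QG _ [s [Hs ->]]; elim: s Hs => [|a s IH] Hs; rewrite ?big_nil ?big_cons.
  exact: G0.
apply: GD; first by apply: QG; apply: Hs; rewrite inE eqxx.
by apply: IH => p ps; apply: Hs; rewrite inE ps orbT.
Qed.

Lemma M_sub Q Q' : Q `<=` Q' -> M Q `<=` M Q'.
Proof. by move=> sub _ [s [Hs ->]]; exists s; split=> // p /Hs /sub. Qed.

Lemma sum_ge_count (s : seq mon) (Pp : pred mon) (F : mon -> R) t :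
  (forall p, p \in s -> Pp p -> t <= F p) ->
  (count Pp s)%:R * t <= \sum_(p <- s | Pp p) F p.
Proof.
elim: s => [|a s IH] h; first by rewrite big_nil mul0r.
rewrite big_cons /=; case: (boolP (Pp a)) => pa /=.
  rewrite add1n -natr1 mulrDl mul1r addrC; apply: lerD.
    by apply: h; rewrite ?inE ?eqxx.
  by apply: IH => p ps; apply: h; rewrite inE ps orbT.
by rewrite add0n; apply: IH => p ps; apply: h; rewrite inE ps orbT.
Qed.

Lemma neumann_step l P : P `<=` [set p | lexlt 0 p] -> WO P ->
  NDS (M (P `&` G l.+1)) -> NDS (M (P `&` G l)).
Proof.
move=> Ppos hP IH.
pose Ql := (P `&` G l) `&` [set p | 0 < coord l p].
have nonneg : forall p, (P `&` G l) p -> 0 <= coord l p.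
  by move=> p [Pp Gp]; rewrite -(coord0 l); apply: G_le; [left; apply: Ppos | apply: G0 | exact: Gp].
have toQ' : forall p, (P `&` G l) p -> ~~ (0 < coord l p) -> (P `&` G l.+1) p.
  move=> p [Pp Gp] np; split=> //; apply/GS; split=> //.
  apply/eqP; rewrite eq_le (nonneg p) ?andbT; [by rewrite leNgt|by split].
case: (pselect (Ql !=set0)) => [nQl|eQl]; last first.
  apply: NDS_sub IH; apply: M_sub => p Qp; apply: toQ' => //; apply/negP => pos.
  by apply: eQl; exists p.
have [pm [[Ppm Gpm] pmpos] pmin] := hP Ql (fun p (h : Ql p) => h.1.1) nQl.
have theta_le : forall q, Ql q -> coord l pm <= coord l q.
  move=> q Qq; rewrite leNgt; apply/negP => /(G_lt Qq.1.2 Gpm) lt.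
  by apply: (lt_nle lt); apply: pmin.
move=> c Mc dec.
pose X := coord l (c 0%N); pose th := coord l pm.
have [K XK] : exists K : nat, X < K%:R * th.
  exists (Num.Def.archi_bound (`|X| / th)).
  have := archi_boundP (divr_ge0 (normr_ge0 X) (ltW pmpos)).
  rewrite ltr_pdivrMr // => h; exact: le_lt_trans (ler_norm X) h.
have WOS : WO (sumset (SK K Ql) (M (P `&` G l.+1))).
  apply: WO_sumset; first by apply: WO_SK; apply: WO_sub hP => p h; exact: h.1.1.
  exact: NDS_WO.
apply: (WO_NDS WOS (x := c)); last exact: dec.
move=> n; case: (Mc n) => s [Hs e].
pose pos := fun p : mon => 0 < coord l p.
have GQ : (P `&` G l) `<=` G l by move=> p h; exact: h.2.
have h2 : coord l (c n) <= X.
  apply: G_le; [|exact: M_G GQ _ (Mc n)|exact: M_G GQ _ (Mc 0%N)].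
  case: n {Hs e} => [|n]; first by right.
  by left; exact: (dec_chain dec (ltn0Sn n)).
have h1 : (count pos s)%:R * th <= coord l (c n).
  rewrite e (bigID pos) /= coordD !coord_sum.
  rewrite [X in _ + X]big1_seq ?addr0; last first.
    by move=> p /andP [np ps]; case: (toQ' p (Hs p ps) np) => _ /GS [].
  apply: sum_ge_count => p ps pp; apply: theta_le; split=> //; exact: Hs.
rewrite e (bigID pos) /=.
exists (\sum_(p <- s | pos p) p), (\sum_(p <- s | ~~ pos p) p); split; last split=> //.
- rewrite -big_filter; apply: SK_sum.
    move=> p; rewrite mem_filter => /andP [pp ps]; split=> //; exact: Hs.
  rewrite size_filter; apply: ltnW; rewrite -(ltr_nat R) -(ltr_pM2r pmpos).
  exact: le_lt_trans h1 (le_lt_trans h2 XK).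
- exists [seq p <- s | ~~ pos p]; rewrite big_filter; split=> //.
  move=> p; rewrite mem_filter => /andP [np ps]; exact: toQ' _ (Hs _ ps) np.
Qed.

Lemma neumann P : P `<=` [set p | lexlt 0 p] -> WO P -> WO (M P).
Proof.
move=> Ppos hP.
have base : NDS (M (P `&` G r.+1)).
  move=> c Mc dec.
  have c0 : forall n, c n = 0.
    move=> n; case: (Mc n) => [[|a s] [Hs ->]]; first by rewrite big_nil.
    have [Pa Ga] := Hs a (mem_head _ _).
    by have := Ppos _ Pa; rewrite (G_top Ga) => /lt_irr.
  by have := dec 0%N; rewrite !c0 => /lt_irr.
have H : forall d, NDS (M (P `&` G (r.+1 - d))).
  elim=> [|d IH]; first by rewrite subn0.
  case: (ltnP d r.+1) => hd.
    have e : (r.+1 - d = (r.+1 - d.+1).+1)%N by rewrite subSS subSn.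
    by rewrite e in IH; exact: neumann_step IH.
  have e : (r.+1 - d.+1 = r.+1 - d)%N.
    by move: (hd); rewrite -subn_eq0 => /eqP ->; apply/eqP; rewrite subn_eq0 (leq_trans hd).
  by rewrite e.
move: (H r.+1); rewrite subnn => h; apply: NDS_WO; apply: NDS_sub h.
by apply: M_sub => p Pp; split=> // k; rewrite ltn0.
Qed.

Lemma fin_repr A T m : WO A -> WO T -> finite_set [set a | A a /\ T (m - a)].
Proof.
move=> hA hT; apply: contrapT => inf.
set F := [set a | A a /\ T (m - a)] in inf.
have ex : forall l : seq mon, exists x, F x /\ x \notin l.
  move=> l; apply: contrapT => nx; apply: inf.
  apply: (sub_finite_set _ (finite_seq l)) => x Fx /=.
  by apply: contrapT => /negP xl; apply: nx; exists x.
have [g Hg] := choice ex.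
pose s := fix s n := if n is n'.+1 then g (s n') :: s n' else [::].
pose u n := g (s n).
have mem : forall i j, (i < j)%N -> u i \in s j.
  move=> i; elim=> [//|j IH]; rewrite ltnS leq_eqVlt => /orP[/eqP->|ij] /=.
    by rewrite inE eqxx.
  by rewrite inE IH ?orbT.
have [sg [sinc sle]] := WO_subseq hA (fun n => (proj1 (Hg (s n))).1).
apply: (WO_NDS hT (x := fun k => m - u (sg k))).
  by move=> k; exact: (proj1 (Hg (s (sg k)))).2.
move=> k /=.
have ne : u (sg k) <> u (sg k.+1).
  move=> e; have := (proj2 (Hg (s (sg k.+1)))); rewrite -/(u _) -e.
  by rewrite mem.
have lt : lexlt (u (sg k)) (u (sg k.+1)) by case: (sle k).
apply/lt0_sub; move/lt0_sub: lt.
move=> h; suff -> : forall a b : mon, (m - a) - (m - b) = b - a by []. by move=> a b; rewrite opprB addrC addrA subrK.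
Qed.

Lemma fsum_nz (F : mon -> R) (D : set mon) :
  \sum_(i \in D) F i != 0 -> exists i, F i != 0.
Proof.
move=> h; apply: contrapT => nx; move/negP: h; apply.
apply/eqP; apply: fsbig1 => i _; apply/eqP; apply: contrapT => /negP ne.
by apply: nx; exists i.
Qed.

Lemma fsum_nat_nz (F : nat -> R) (D : set nat) :
  \sum_(i \in D) F i != 0 -> exists i, F i != 0.
Proof.
move=> h; apply: contrapT => nx; move/negP: h; apply.
apply/eqP; apply: fsbig1 => i _; apply/eqP; apply: contrapT => /negP ne.
by apply: nx; exists i.
Qed.

Section Alg.
Variable T : set mon.
Hypothesis T0 : T 0.
Hypothesis TD : forall x y, T x -> T y -> T (x + y).
Hypothesis Tnn : forall x, T x -> lexle 0 x.

Lemma supp_one : lsupp (@Defs.one R r) `<=` T.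
Proof.
move=> m; rewrite /lsupp /Defs.one /=; have [->|ne] := eqVneq m 0 => //; by rewrite /= eqxx.
Qed.

Lemma supp_mul f g : lsupp f `<=` T -> lsupp g `<=` T -> lsupp (Defs.mul f g) `<=` T.
Proof.
move=> hf hg m /fsum_nz [y]; rewrite mulf_eq0 negb_or => /andP [fy gy].
have -> : m = y + (m - y) by rewrite addrC subrK.
by apply: TD; [apply: hf | apply: hg].
Qed.

Lemma supp_pow f k : lsupp f `<=` T -> lsupp (pow f k) `<=` T.
Proof.
move=> hf; elim: k => [|k IH] /=; first exact: supp_one.
exact: supp_mul.
Qed.

Lemma supp_powser (c : nat -> R) f : lsupp f `<=` T -> lsupp (powser c f) `<=` T.
Proof.
move=> hf m /fsum_nat_nz [k]; rewrite mulf_eq0 negb_or => /andP [_ h].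
by apply: (supp_pow (k:=k) hf); exact: h.
Qed.

Lemma T_antisym y : T y -> T (- y) -> y = 0.
Proof.
move=> h1 h2; apply: le_antisym; last exact: Tnn.
by have := le_add y (Tnn h2); rewrite add0r addNr.
Qed.

Lemma mul0E f g : lsupp f `<=` T -> lsupp g `<=` T -> Defs.mul f g 0 = f 0 * g 0.
Proof.
move=> hf hg; rewrite /Defs.mul -(fsbig_widen [set 0] setT);
  [by rewrite fsbig_set1 subr0 | by [] | ].
move=> y [_ /= ny]; rewrite /preimage /=; apply/eqP; rewrite mulf_eq0.
case: (boolP (f y == 0)) => [//|fy] /=; apply/eqP; apply: contrapT => gy.
apply: ny; apply: T_antisym; first by apply: hf; exact: fy.
by apply: hg; rewrite /lsupp /= -sub0r; apply/eqP.
Qed.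

Lemma pow0E f k : lsupp f `<=` T -> f 0 = 0 -> pow f k 0 = (k == 0%N)%:R.
Proof.
move=> hf f0; case: k => [|k] /=; first by rewrite /Defs.one eqxx.
by rewrite mul0E ?f0 ?mul0r //; apply: supp_pow.
Qed.

Lemma powser0E (c : nat -> R) f : lsupp f `<=` T -> f 0 = 0 -> powser c f 0 = c 0%N.
Proof.
move=> hf f0; rewrite /powser -(fsbig_widen [set 0%N] setT) // ?fsbig_set1.
  by rewrite pow0E // mulr1.
move=> k [_ /= nk]; rewrite pow0E //; case: eqP => // _; by rewrite mulr0.
Qed.

End Alg.

Lemma binr0 (a : R) : binr a 0 = 1.
Proof. by rewrite /binr big_ord0 fact0 div1r invr1. Qed.

Lemma ellmon_neq0 j : (j < r)%N -> @ellmon R r j != 0.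
Proof.
move=> jr; apply/eqP => e.
have := congr1 (fun x : mon => x.2 ord0 (Ordinal jr)) e.
by rewrite /ellmon /= !mxE eqxx.
Qed.

Section Phi.
Variable T : set mon.
Hypothesis T0 : T 0.
Hypothesis TD : forall x y, T x -> T y -> T (x + y).
Hypothesis Tnn : forall x, T x -> lexle 0 x.
Variable phi : ser R r.
Hypothesis Teps : lsupp (eps phi) `<=` T.
Hypothesis Tell : forall j : nat, T (@ellmon R r j).
Hypothesis phiz : phi (@zmon R r) = 1.

Lemma supp_ell j : lsupp (@ell R r j) `<=` T.
Proof.
move=> m; rewrite /lsupp /ell /=; have [->|ne] := eqVneq m (@ellmon R r j) => //.
by rewrite /= eqxx.
Qed.

Lemma supp_delta j : lsupp (delta phi j) `<=` T.
Proof.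
elim: j => [|j IH] /=; first exact: Teps.
apply: supp_powser => //; apply: supp_mul => //; first exact: supp_ell.
exact: supp_powser.
Qed.

Lemma eps0 : eps phi 0 = 0.
Proof. by rewrite /eps add0r phiz /Defs.one eqxx subrr. Qed.

Lemma delta0 i : (i < r)%N -> delta phi i.+1 0 = 0.
Proof.
move=> ir /=; rewrite (powser0E T0 TD Tnn) //.
  apply: supp_mul => //; first exact: supp_ell.
  by apply: supp_powser => //; apply: supp_delta.
rewrite (mul0E Tnn); [|exact: supp_ell|by apply: supp_powser => //; apply: supp_delta].
by rewrite /ell eq_sym (negbTE (ellmon_neq0 ir)) mul0r.
Qed.

Lemma unitfac_supp0 m0 : lsupp (unitfac phi m0) `<=` T /\ unitfac phi m0 0 = 1.
Proof.
have H : lsupp (\big[@Defs.mul R r/@Defs.one R r]_(i < r) powser (binr (m0.2 ord0 i)%:~R) (delta phi i.+1)) `<=` T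
  /\ (\big[@Defs.mul R r/@Defs.one R r]_(i < r) powser (binr (m0.2 ord0 i)%:~R) (delta phi i.+1)) 0 = 1.
  apply: (big_ind (fun f : ser R r => lsupp f `<=` T /\ f 0 = 1)).
  - by split; [exact: supp_one | rewrite /Defs.one eqxx].
  - move=> f g [hf f1] [hg g1]; split; first exact: supp_mul.
    by rewrite (mul0E Tnn) // f1 g1 mulr1.
  - move=> i _; split; first by apply: supp_powser => //; apply: supp_delta.
    by rewrite (powser0E T0 TD Tnn) ?binr0 //; [apply: supp_delta | apply: delta0].
case: H => H1 H2; split.
  by apply: supp_mul => //; apply: supp_powser.
rewrite /unitfac (mul0E Tnn) // ?H2 ?(powser0E T0 TD Tnn) ?binr0 ?mulr1 //.
- exact: eps0.
- by apply: supp_powser.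
Qed.

End Phi.

Lemma compose_seq (T A : set mon) phi (g : ser R r) m :
  (forall m0, lsupp (unitfac phi m0) `<=` T) -> lsupp g `<=` A ->
  finite_set [set a | A a /\ T (m - a)] ->
  compose g phi m = \sum_(i <- fset_set [set a | A a /\ T (m - a)])
                      g i * unitfac phi i (m - i).
Proof.
move=> hU hgA hF; rewrite /compose -(fsbig_widen [set a | A a /\ T (m - a)] setT) //.
  by rewrite fsbig_finite.
move=> x [_ /= nF]; rewrite /preimage /= /Defs.shift; apply/eqP; rewrite mulf_eq0.
case: (boolP (g x == 0)) => [//|gx] /=; apply/eqP; apply: contrapT => ux.
by apply: nF; split; [apply: hgA; exact: gx | apply: (hU x); apply/eqP].
Qed.

Lemma cvg_bigseq (s : seq mon) (Pp : pred mon) (F : nat -> mon -> R) (L : mon -> R) :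
  (forall i, i \in s -> Pp i -> (fun n => F n i) @ \oo --> L i) ->
  (fun n => \sum_(i <- s | Pp i) F n i) @ \oo --> \sum_(i <- s | Pp i) L i.
Proof.
elim: s => [|a s IH] h.
  rewrite big_nil; under eq_fun do rewrite big_nil; exact: cvg_cst.
rewrite big_cons; under eq_fun do rewrite big_cons.
case: (boolP (Pp a)) => pa.
  apply: cvgD; first by apply: h; rewrite ?inE ?eqxx.
  by apply: IH => i si pi; apply: h; rewrite // inE si orbT.
by apply: IH => i si pi; apply: h; rewrite // inE si orbT.
Qed.


Lemma WO_E k : WO [set m | exists2 j, (j < k)%N & m = @ellmon R r j].
Proof.
elim: k => [|k IH].
  by apply: (@WO_sub _ [set (0 : mon)]); [move=> m [j] | apply: WO_set1].
apply: (@WO_sub _ ([set m | exists2 j, (j < k)%N & m = @ellmon R r j] `|` [set @ellmon R r k])).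
  2: by apply: WO_setU; [exact: IH | exact: WO_set1].
move=> m [j].
rewrite ltnS leq_eqVlt => /orP[/eqP->|jk] ->; [right|left] => //.
by exists j.
Qed.

Lemma ellmon_pos j : (j < r)%N -> lexlt 0 (@ellmon R r j).
Proof.
move=> jr; right; split => //; exists (Ordinal jr); split.
  move=> j' j'j; rewrite !mxE /=.
  by have -> : ((j' : nat) == j) = false by apply/negbTE; rewrite neq_ltn j'j.
by rewrite !mxE /= eqxx.
Qed.

Lemma ellmon_ge j : (r <= j)%N -> @ellmon R r j = 0.
Proof.
move=> rj; congr pair; apply/rowP => i; rewrite !mxE.
have -> : ((i : nat) == j) = false.
  by apply/negbTE; rewrite neq_ltn (leq_trans (ltn_ord i) rj).
by [].
Qed.

Lemma M_facts P : P `<=` [set p | lexlt 0 p] ->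
  [/\ M P 0, (forall x y, M P x -> M P y -> M P (x + y)),
      (forall x, M P x -> lexle 0 x) & P `<=` M P].
Proof.
move=> Ppos; split.
- by exists [::]; rewrite big_nil.
- move=> _ _ [s1 [h1 ->]] [s2 [h2 ->]]; exists (s1 ++ s2); rewrite big_cat; split=> //.
  by move=> p; rewrite mem_cat => /orP[/h1|/h2].
- move=> _ [s [hs ->]]; elim: s hs => [|a s IH] hs; first by rewrite big_nil; right.
  rewrite big_cons; apply: le0_add; first by left; apply: Ppos; apply: hs; rewrite inE eqxx.
  by apply: IH => p ps; apply: hs; rewrite inE ps orbT.
- by move=> p Pp; exists [:: p]; rewrite big_seq1; split=> // q; rewrite inE => /eqP ->.
Qed.

End S.

Unset Implicit Arguments.
Theorem lemma4p9 (R : realType) (r : nat) (W : set (mon R r))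
    (g : nat -> ser R r) (g0 phi : ser R r) :
  W `<=` [set m | 0 <= m.1] ->
  lex_wellordered W ->
  (forall w, W w -> lexlt 0 w) ->
  (forall n, inL (g n)) ->
  (forall n, lsupp (g n) `<=` W) ->
  inL g0 ->
  inL0 phi ->
  (weak_cvg g g0 <->
   weak_cvg (fun n => compose (g n) phi) (compose g0 phi)).
Proof.
move=> _ hW _ _ hgW [hg0WO _] [[hphiWO _] [phiz phimin]].
pose Pe := [set m : mon R r | lsupp phi (m + zmon R r) /\ m != 0].
pose E := [set m : mon R r | exists2 j, (j < r)%N & m = ellmon R r j].
pose P := Pe `|` E.
have Ppos : P `<=` [set p | lexlt 0 p].
  move=> m [[hm ne]|[j jr ->]]; last exact: ellmon_pos.
  have := phimin _ hm; rewrite -{1}(add0r (zmon R r)) => /le_addr [//|e].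
  by rewrite e eqxx in ne.
have PWO : lex_wellordered P.
  apply: WO_setU; last exact: WO_E.
  apply: (@WO_sub _ _ _ (sumset (lsupp phi) [set - zmon R r])).
    move=> m [hm _]; exists (m + zmon R r), (- zmon R r); split=> //; split=> //.
    by rewrite addrK.
  by apply: WO_sumset => //; apply: WO_set1.
pose T := M P.
have [T0 TD Tnn PT] := M_facts Ppos.
have TWO : lex_wellordered T by apply: neumann.
have Teps : lsupp (eps phi) `<=` T.
  move=> m; rewrite /lsupp /= /eps /Defs.one.
  have [->|ne] := eqVneq m 0; first by move=> _; apply: T0.
  rewrite /= subr0 => h; apply: PT; left; split=> //; exact: h.
have Tell : forall j, T (ellmon R r j).
  move=> j; case: (ltnP j r) => jr; first by apply: PT; right; exists j.
  by rewrite ellmon_ge.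
have UF := unitfac_supp0 T0 TD Tnn Teps Tell phiz.
pose A := W `|` lsupp g0.
have AWO : lex_wellordered A by apply: WO_setU.
have hgA : forall n, lsupp (g n) `<=` A by move=> n m h; left; apply: hgW h.
have hg0A : lsupp g0 `<=` A by move=> m h; right.
have Fin := fun m => fin_repr m AWO TWO.
have dec := fun h m (hA : lsupp h `<=` A) => compose_seq (fun m0 => (UF m0).1) hA (Fin m).
split.
- move=> cv m; rewrite dec //; under eq_fun do rewrite dec //.
  apply: cvg_bigseq => i _ _; apply: cvgMr_tmp; exact: cv.
move=> cv.
have key : forall m, A m -> (fun n => g n m) @ \oo --> g0 m.
  move=> m Am; apply: contrapT => nc.
  pose C := [set m | A m /\ ~ ((fun n => g n m) @ \oo --> g0 m)].
  have [m1 [Am1 nc1] m1min] := AWO C (fun _ h => h.1) (ex_intro _ m (conj Am nc)).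
  apply: nc1.
  pose s := fset_set [set a | A a /\ T (m1 - a)].
  have m1s : m1 \in s.
    rewrite /s in_fset_set; last exact: Fin.
    by rewrite inE; split=> //; rewrite subrr.
  have us : uniq s by exact: fset_uniq.
  have split_eq : forall h, lsupp h `<=` A -> h m1 = compose h phi m1 -
      \sum_(i <- s | i != m1) h i * unitfac phi i (m1 - i).
    move=> h hA; rewrite (dec h m1 hA) -/s (bigD1_seq m1) //= subrr (UF m1).2 mulr1.
    by rewrite addrK.
  rewrite (split_eq g0 hg0A); under eq_fun do rewrite (split_eq (g _) (hgA _)).
  apply: cvgB; first exact: cv.
  apply: cvg_bigseq => i si ni; apply: cvgMr_tmp; apply: contrapT => nci.
  have [Ai Ti] : A i /\ T (m1 - i).
    by move: si; rewrite /s in_fset_set ?inE //; exact: Fin.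
  have lt : lexlt i m1.
    apply/lt0_sub; case: (Tnn _ Ti) => // e.
    by move: ni; rewrite eq_sym -subr_eq0 -e eqxx.
  by apply: (lt_nle lt); apply: m1min.
move=> m; case: (pselect (A m)) => Am; first exact: key.
have e : forall h, lsupp h `<=` A -> h m = 0.
  by move=> h hA; apply: contrapT => /eqP nz; apply: Am; apply: hA.
rewrite (e _ hg0A); under eq_fun do rewrite (e _ (hgA _)); exact: cvg_cst.
Qed.
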